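(* Let $\mathcal{M}=(\pi,x)$ be an incentive compatible auction mechanism with display prices. Then for every advertiser $i$, every display price profile $\mathbf{p}$ and every cost-report profile $\mathbf{c}'_{-i}$ of the others, there is a quantity $U_i(\mathbf{c}'_{-i},\mathbf{p})$ not depending on $i$'s cost report such that for all $c_i\in[\underline{c}_i,\overline{c}_i]$, $$x_i(c_i,\mathbf{c}'_{-i},\mathbf{p})=v_i(c_i,p_i)\pi_i(c_i,\mathbf{c}'_{-i},\mathbf{p})-\lambda_i(p_i)\int_{c_i}^{\overline{c}_i}\pi_i(z,\mathbf{c}'_{-i},\mathbf{p})\,dz-U_i(\mathbf{c}'_{-i},\mathbf{p}).$$
   Context: There are advertisers $N=\{1,\dots,n\}$ competing for a single ad slot. Advertiser $i$ has a private product cost $c_i\in[\underline{c}_i,\overline{c}_i]$ and sets a display price $p_i$. Her conversion-rate function is $\lambda_i:\mathbb{R}\to(0,1]$, and her value when displayed at price $p_i$ is $v_i(c_i,p_i)=(p_i-c_i)\lambda_i(p_i)$. Each advertiser reports a cost $c_i'$ and a display price $p_i$; write $\mathbf{c}'=(c_i',\mathbf{c}'_{-i})$, $\mathbf{p}=(p_i,\mathbf{p}_{-i})$. An auction mechanism $\mathcal{M}=(\pi,x)$ consists of allocation functions $\pi_i(\mathbf{c}',\mathbf{p})\in\{0,1\}$ (at most one advertiser wins the slot) and payment functions $x_i(\mathbf{c}',\mathbf{p})\in\mathbb{R}$. The utility of advertiser $i$ with true cost $c_i$ is $u_i(c_i,\mathbf{c}',\mathbf{p},\mathcal{M})=v_i(c_i,p_i)\pi_i(\mathbf{c}',\mathbf{p})-x_i(\mathbf{c}',\mathbf{p})$.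 $\mathcal{M}$ is incentive compatible (IC) if for all $i$, all $c_i$, all $\mathbf{p}$ and all $\mathbf{c}'$: $u_i(c_i,(c_i,\mathbf{c}'_{-i}),\mathbf{p},\mathcal{M})\ge u_i(c_i,(c_i',\mathbf{c}'_{-i}),\mathbf{p},\mathcal{M})$. *)

(* Defs.v *)
From Stdlib Require Import Reals.
From Coquelicot Require Import Coquelicot.
From mathcomp Require Import ssreflect ssrbool eqtype ssrnat fintype.
Open Scope R_scope.

(* profile (c_i, c'_{-i}) : replace entry i of c' by z *)
Definition upd {n : nat} (c' : 'I_n -> R) (i : 'I_n) (z : R) : 'I_n -> R :=
  fun j => if j == i then z else c' j.

Definition b2R (b : bool) : R := if b then 1 else 0.

Definition value (lam : R -> R) (c p : R) : R := (p - c) * lam p.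

Definition utility {n : nat} (lam : 'I_n -> R -> R)
  (pi : 'I_n -> ('I_n -> R) -> ('I_n -> R) -> bool)
  (x : 'I_n -> ('I_n -> R) -> ('I_n -> R) -> R)
  (i : 'I_n) (ci : R) (c' p : 'I_n -> R) : R :=
  value (lam i) ci (p i) * b2R (pi i c' p) - x i c' p.

Definition in_range {n : nat} (lo hi c : 'I_n -> R) : Prop :=
  forall j, lo j <= c j <= hi j.

Definition single_slot {n : nat}
  (pi : 'I_n -> ('I_n -> R) -> ('I_n -> R) -> bool) : Prop :=
  forall c' p i j, pi i c' p -> pi j c' p -> i = j.

Definition IC {n : nat} (lo hi : 'I_n -> R) (lam : 'I_n -> R -> R)
  (pi : 'I_n -> ('I_n -> R) -> ('I_n -> R) -> bool)
  (x : 'I_n -> ('I_n -> R) -> ('I_n -> R) -> R) : Prop :=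
  forall (i : 'I_n) (ci : R) (p c' : 'I_n -> R),
    lo i <= ci <= hi i -> in_range lo hi c' ->
    utility lam pi x i ci (upd c' i ci) p >= utility lam pi x i ci c' p.

(* Main.v *)
Require Import Defs.
From Stdlib Require Import Reals.
From Coquelicot Require Import Coquelicot.
From mathcomp Require Import ssreflect ssrbool eqtype ssrnat fintype.
Open Scope R_scope.
From Stdlib Require Import Lra FunctionalExtensionality.
Lemma eps_lo (X K a b : R) : a < b -> 0 < K ->
  (forall s, a < s < b -> X <= K * (b - s)) -> X <= 0.
Proof.
  intros Hab HK H. destruct (Rle_dec X 0) as [|Hn]; [assumption|].
  apply Rnot_le_lt in Hn. exfalso.
  set m := Rmin ((b - a) / 2) (X / (2 * K)).
  assert (Hm1 : m <= (b - a) / 2) by apply Rmin_l.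
  assert (Hm2 : m <= X / (2 * K)) by apply Rmin_r.
  assert (Hm0 : 0 < m) by (apply Rmin_glb_lt; [lra| apply Rdiv_lt_0_compat; lra]).
  specialize (H (b - m) ltac:(lra)).
  assert (K * m <= K * (X / (2*K))) by (apply Rmult_le_compat_l; lra).
  replace (K * (X / (2*K))) with (X/2) in H0 by (field; lra).
  replace (b - (b - m)) with m in H by ring. lra.
Qed.

Lemma eps_hi (X K a b : R) : a < b -> 0 < K ->
  (forall s, a < s < b -> X <= K * (s - a)) -> X <= 0.
Proof.
  intros Hab HK H. apply (eps_lo X K (-b) (-a)); try lra.
  intros s Hs. specialize (H (- s) ltac:(lra)). replace (- a - s) with (-s - a) by ring. lra.
Qed.

Lemma core (g u : R -> R) (L lo hi : R) : 0 < L ->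
  (forall z, g z = 0 \/ g z = 1) ->
  (forall a b, lo <= a <= hi -> lo <= b <= hi ->
     (b - a) * L * g b <= u a - u b <= (b - a) * L * g a) ->
  forall c, lo <= c <= hi -> u c - u hi = L * RInt g c hi.
Proof.
  intros HL H01 HA c Hc.
  assert (Hmono : forall a b, lo <= a <= hi -> lo <= b <= hi -> a < b -> g b <= g a).
  { intros a b Ha Hb Hab. destruct (HA a b Ha Hb) as [H1 H2].
    assert (0 < (b - a) * L) by (apply Rmult_lt_0_compat; lra).
    apply (Rmult_le_reg_l ((b - a) * L)); [assumption| lra]. }
  destruct (H01 c) as [Hg0 | Hg1].
  -
    assert (Hz : forall s, c <= s <= hi -> g s = 0).
    { intros s Hs. destruct (Req_dec s c) as [->|Hne]; [assumption|].
      assert (g s <= g c) by (apply Hmono; lra). destruct (H01 s); lra. }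
    rewrite (RInt_ext g (fun _ => 0)).
    2:{ intros z Hz'. rewrite (Rmin_left c hi ltac:(lra)) in Hz'. rewrite (Rmax_right c hi ltac:(lra)) in Hz'.
        apply Hz; lra. }
    rewrite RInt_const. rewrite /scal /= /mult /=.
    destruct (HA c hi Hc ltac:(lra)) as [H1 H2]. rewrite (Hz hi ltac:(lra)) in H1.
    rewrite Hg0 in H2. nra.
  - set E := fun z => c <= z <= hi /\ g z = 1.
    assert (HB : bound E) by (exists hi; intros z [Hz _]; lra).
    assert (HE : exists z, E z) by (exists c; split; [lra|assumption]).
    destruct (completeness E HB HE) as [t [Hub Hlub]].
    assert (Htc : c <= t) by (apply Hub; split; [lra|assumption]).
    assert (Hth : t <= hi) by (apply Hlub; intros z [Hz _]; lra).
    assert (Hone : forall s, c <= s < t -> g s = 1).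
    { intros s Hs. destruct (H01 s) as [Hs0|]; [|assumption]. exfalso.
      assert (t <= s); [|lra]. apply Hlub. intros w [Hw Hgw].
      destruct (Rle_dec w s) as [|Hn]; [assumption|]. apply Rnot_le_lt in Hn.
      assert (g w <= g s) by (apply Hmono; lra). lra. }
    assert (Hzero : forall s, t < s <= hi -> g s = 0).
    { intros s Hs. destruct (H01 s) as [|Hs1]; [assumption|]. exfalso.
      assert (s <= t) by (apply Hub; split; [lra|assumption]). lra. }
    assert (Hg01 : forall z, 0 <= g z <= 1) by (intro z; destruct (H01 z); lra).
    assert (E1 : u c - u t = L * (t - c)).
    { destruct (HA c t Hc ltac:(lra)) as [H1 H2]. rewrite Hg1 in H2.
      destruct (Req_dec t c) as [->|Hne]; [ring|].
      assert (L * (t - c) - (u c - u t) <= 0); [|lra].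
      apply (eps_lo _ L c t); [lra|assumption|].
      intros s Hs. destruct (HA c s Hc ltac:(lra)) as [H3 _].
      destruct (HA s t ltac:(lra) ltac:(lra)) as [H4 _].
      rewrite (Hone s ltac:(lra)) in H3. specialize (Hg01 t).
      assert (0 <= (t - s) * L * g t) by (apply Rmult_le_pos; [apply Rmult_le_pos|]; lra).
      lra. }
    assert (E2 : u t - u hi = 0).
    { destruct (HA t hi ltac:(lra) ltac:(lra)) as [H1 H2].
      assert (0 <= (hi - t) * L * g hi) by
        (apply Rmult_le_pos; [apply Rmult_le_pos|apply Hg01]; lra).
      destruct (Req_dec t hi) as [->|Hne]; [ring|].
      assert (u t - u hi <= 0); [|lra].
      apply (eps_hi _ L t hi); [lra|assumption|].
      intros s Hs. destruct (HA t s ltac:(lra) ltac:(lra)) as [_ H3].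
      destruct (HA s hi ltac:(lra) ltac:(lra)) as [_ H4].
      rewrite (Hzero s ltac:(lra)) in H4. specialize (Hg01 t).
      assert ((s - t) * L * g t <= (s - t) * L * 1).
      { apply Rmult_le_compat_l; [apply Rmult_le_pos|]; lra. }
      lra. }
    assert (I1 : ex_RInt g c t).
    { apply (ex_RInt_ext (fun _ => 1)); [|apply ex_RInt_const].
      intros z Hz. rewrite (Rmin_left c t ltac:(lra)) in Hz. rewrite (Rmax_right c t ltac:(lra)) in Hz.
      symmetry; apply Hone; lra. }
    assert (I2 : ex_RInt g t hi).
    { apply (ex_RInt_ext (fun _ => 0)); [|apply ex_RInt_const].
      intros z Hz. rewrite (Rmin_left t hi ltac:(lra)) in Hz. rewrite (Rmax_right t hi ltac:(lra)) in Hz.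
      symmetry; apply Hzero; lra. }
    rewrite -(RInt_Chasles g c t hi I1 I2).
    rewrite (RInt_ext g (fun _ => 1) c t).
    2:{ intros z Hz. rewrite (Rmin_left c t ltac:(lra)) in Hz. rewrite (Rmax_right c t ltac:(lra)) in Hz.
        apply Hone; lra. }
    rewrite (RInt_ext g (fun _ => 0) t hi).
    2:{ intros z Hz. rewrite (Rmin_left t hi ltac:(lra)) in Hz. rewrite (Rmax_right t hi ltac:(lra)) in Hz.
        apply Hzero; lra. }
    rewrite !RInt_const /plus /scal /= /mult /=. lra.
Qed.

Lemma upd_upd (n : nat) (c' : 'I_n -> R) (i : 'I_n) (a b : R) :
  upd (upd c' i b) i a = upd c' i a.
Proof. apply functional_extensionality => j; rewrite /upd; by case: (j == i). Qed.

Lemma b2R01 (b : bool) : b2R b = 0 \/ b2R b = 1.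
Proof. case: b; rewrite /b2R; [right|left]; reflexivity. Qed.

Theorem lemma2 (n : nat) (lo hi : 'I_n -> R) (lam : 'I_n -> R -> R)
  (pi : 'I_n -> ('I_n -> R) -> ('I_n -> R) -> bool)
  (x : 'I_n -> ('I_n -> R) -> ('I_n -> R) -> R) :
  (forall i, lo i <= hi i) ->
  (forall i q, 0 < lam i q <= 1) ->
  single_slot pi ->
  IC lo hi lam pi x ->
  forall (i : 'I_n) (p c' : 'I_n -> R), in_range lo hi c' ->
  exists U : R, forall ci : R, lo i <= ci <= hi i ->
    x i (upd c' i ci) p =
      value (lam i) ci (p i) * b2R (pi i (upd c' i ci) p)
      - lam i (p i) * RInt (fun z => b2R (pi i (upd c' i z) p)) ci (hi i)
      - U.
Proof.
  move=> Hlohi Hlam _ HIC i p c' Hc'.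
  set g := fun z => b2R (pi i (upd c' i z) p).
  set u := fun z => utility lam pi x i z (upd c' i z) p.
  set L := lam i (p i).
  have HL : 0 < L by case: (Hlam i (p i)).
  have Hr : forall b, lo i <= b <= hi i -> in_range lo hi (upd c' i b).
  { move=> b Hb j; rewrite /upd; case: eqP => [->|_] //; apply: Hc'. }
  have HA1 : forall a b, lo i <= a <= hi i -> lo i <= b <= hi i ->
     (b - a) * L * g b <= u a - u b.
  { move=> a b Ha Hb. have := HIC i a p (upd c' i b) Ha (Hr b Hb).
    rewrite upd_upd /u /g /utility /value -/L => H.
    have -> : (b - a) * L * b2R (pi i (upd c' i b) p) =
      (p i - a) * L * b2R (pi i (upd c' i b) p) - (p i - b) * L * b2R (pi i (upd c' i b) p) by ring.
    lra. }
  have HA : forall a b, lo i <= a <= hi i -> lo i <= b <= hi i ->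
     (b - a) * L * g b <= u a - u b <= (b - a) * L * g a.
  { move=> a b Ha Hb; split; first exact: HA1.
    have := HA1 b a Hb Ha.
    have -> : (a - b) * L * g a = - ((b - a) * L * g a) by ring. lra. }
  exists (u (hi i)) => ci Hci.
  have := core g u L (lo i) (hi i) HL (fun z => b2R01 _) HA ci Hci.
  rewrite /u /utility -/L => <-. rewrite /g. ring.
Qed.
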